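(* Fix $p\in(0,1)$. Suppose either (1) $\mathbb P(v\ge x)=L(x)x^{-a}$ for $x\ge0$, with $a>1$ and $L$ slowly varying (i.e. $\lim_{x\to\infty}L(tx)/L(x)=1$ for each $t>0$); or (2) $\mathbb P(v\ge x)=L(x)e^{-\delta x^\beta}$ for $x\ge0$, with $\beta\in(0,1/2)$, $\delta>0$ and $L$ slowly varying. Then $$\lim_{j\to\infty}\left|\frac{\mathbb P(\tilde v\ge j)}{\mathbb P(v\ge j/p)}-1\right|=0 .$$
   Context: Probabilistic model: $(B_n)_{n\ge1}$ is a sequence of i.i.d. Bernoulli random variables with parameter $p$, $v$ is a random variable with values in $\mathbb N$ independent of $(B_n)$, and $\tilde v=\sum_{\ell=1}^v B_\ell$. *)

(* Defs.v *)
From Stdlib Require Import Reals.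
Open Scope R_scope.

(* pmf q of an N-valued random variable v *)
Definition is_pmf (q : nat -> R) : Prop :=
  (forall n, 0 <= q n) /\ infinite_sum q 1.

(* P(Bin(n,p) >= j) = P(sum_{l=1}^n B_l >= j) *)
Definition binom_tail (p : R) (n j : nat) : R :=
  sum_f_R0 (fun k => if Nat.leb j k then C n k * p ^ k * (1 - p) ^ (n - k) else 0) n.

(* T x = P(v >= x) for real x *)
Definition is_tail_v (q : nat -> R) (T : R -> R) : Prop :=
  forall x : R,
    infinite_sum (fun n => if Rle_dec x (INR n) then q n else 0) (T x).

(* Tt j = P(vtilde >= j), vtilde = sum_{l=1}^v B_l, v independent of (B_l) *)
Definition is_tail_vtilde (q : nat -> R) (p : R) (Tt : nat -> R) : Prop :=
  forall j : nat,
    infinite_sum (fun n => q n * binom_tail p n j) (Tt j).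

Definition slowly_varying (L : R -> R) : Prop :=
  forall t : R, 0 < t ->
    forall eps : R, 0 < eps ->
      exists M : R, forall x : R, M < x -> Rabs (L (t * x) / L x - 1) < eps.

(* Main.v *)
Require Import Defs.
From Stdlib Require Import Reals Lra Lia Arith ZArith ClassicalEpsilon Classical.
Open Scope R_scope.

Lemma exp_ub1 u : u < 1 -> exp u * (1 - u) <= 1.
Proof.
  intros Hu. assert (H := exp_ineq1_le (- u)).
  assert (Hp := exp_pos u).
  replace 1 with (exp u * exp (- u)) at 2 by (rewrite <- exp_plus; replace (u + - u) with 0 by ring; apply exp_0).
  apply Rmult_le_compat_l; lra.
Qed.

Lemma exp_quad u : u <= 1/2 -> exp u <= 1 + u + 2 * u ^ 2.
Proof.
  intros Hu. assert (H := exp_ub1 u ltac:(lra)). assert (Hp := exp_pos u).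
  assert (Hq : 1 <= (1 - u) * (1 + u + 2 * u ^ 2)).
  { assert (0 <= u^2 * (1 - 2*u)) by (apply Rmult_le_pos; [apply pow2_ge_0|lra]). nra. }
  assert (0 < 1 - u) by lra.
  apply Rmult_le_reg_r with (1 - u); [lra|].
  nra.
Qed.

Lemma exp_lin u : 0 <= u <= 1/2 -> exp u <= 1 + 2 * u.
Proof. intros H. assert (H1 := exp_quad u ltac:(lra)). nra. Qed.

Lemma ln_le_sub1 x : 0 < x -> ln x <= x - 1.
Proof. intros H. assert (H1 := exp_ineq1_le (ln x)). rewrite exp_ln in H1; lra. Qed.

Lemma exp_pow_INR x n : exp x ^ n = exp (INR n * x).
Proof.
  induction n; simpl. - rewrite Rmult_0_l, exp_0; ring.
  - rewrite IHn, <- exp_plus. f_equal. destruct n; simpl; ring.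
Qed.

Lemma sum_scal_l (f : nat -> R) c N : sum_f_R0 (fun n => c * f n) N = c * sum_f_R0 f N.
Proof. induction N; simpl; [ring| rewrite IHN; ring]. Qed.

Lemma inf_sum_le (f g : nat -> R) lf lg :
  (forall n, f n <= g n) -> infinite_sum f lf -> infinite_sum g lg -> lf <= lg.
Proof.
  intros H Hf Hg. apply (Rle_cv_lim (Un:=fun N => sum_f_R0 f N) (Vn:=fun N => sum_f_R0 g N)); auto.
  intros; apply sum_growing; auto.
Qed.

Lemma inf_sum_partial (f : nat -> R) l N :
  (forall n, 0 <= f n) -> infinite_sum f l -> sum_f_R0 f N <= l.
Proof. intros H Hf. apply sum_incr; auto. Qed.

Lemma inf_sum_ub (f : nat -> R) l B :
  (forall N, sum_f_R0 f N <= B) -> infinite_sum f l -> l <= B.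
Proof.
  intros H Hf. apply (Rle_cv_lim (Un:=fun N => sum_f_R0 f N) (Vn:=fun _ => B)); auto.
  intros e He; exists 0%nat; intros; unfold Rdist; rewrite Rminus_diag, Rabs_R0; auto.
Qed.

Lemma inf_sum_scal (f : nat -> R) l c :
  infinite_sum f l -> infinite_sum (fun n => c * f n) (c * l).
Proof.
  intros Hf. unfold infinite_sum in *.
  intros e He.
  destruct (Req_dec c 0) as [Hc|Hc].
  - exists 0%nat; intros n _. unfold Rdist. subst c.
    replace (sum_f_R0 (fun n0 => 0 * f n0) n) with 0.
    + rewrite Rmult_0_l, Rminus_0_r, Rabs_R0; auto.
    + induction n; simpl; [ring| rewrite <- IHn; ring].
  - destruct (Hf (e / Rabs c)) as [N HN].
    { apply Rdiv_lt_0_compat; auto. apply Rabs_pos_lt; auto. }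
    exists N; intros n Hn. specialize (HN n Hn). unfold Rdist in *.
    rewrite sum_scal_l.
    replace (c * sum_f_R0 f n - c * l) with (c * (sum_f_R0 f n - l)) by ring.
    rewrite Rabs_mult.
    assert (0 < Rabs c) by (apply Rabs_pos_lt; auto).
    apply Rmult_lt_reg_l with (/ Rabs c). apply Rinv_0_lt_compat; auto.
    rewrite <- Rmult_assoc, Rinv_l, Rmult_1_l by lra.
    unfold Rdiv in HN; lra.
Qed.

Lemma exp_le_mono x y : x <= y -> exp x <= exp y.
Proof. intros [H|H]; [left; apply exp_increasing; auto| subst; lra]. Qed.

Lemma ln_le_mono x y : 0 < x -> x <= y -> ln x <= ln y.
Proof. intros Hx [H|H]; [left; apply ln_increasing; auto| subst; lra]. Qed.

Lemma exp_le_inv x y : exp x <= exp y -> x <= y.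
Proof. intros H. destruct (Rle_dec x y); auto. assert (exp y < exp x) by (apply exp_increasing; lra). lra. Qed.

Lemma sum_ge_last (f : nat -> R) N : (forall n, 0 <= f n) -> f N <= sum_f_R0 f N.
Proof.
  intros H. destruct N; simpl; [lra|].
  assert (0 <= sum_f_R0 f N) by (apply cond_pos_sum; auto). lra.
Qed.

Section TProps.
Variables (q : nat -> R) (T : R -> R).
Hypothesis Hq : is_pmf q.
Hypothesis HT : is_tail_v q T.

Lemma T_mono x y : x <= y -> T y <= T x.
Proof.
  intros Hxy. apply (inf_sum_le _ _ _ _ ) with (2 := HT y) (3 := HT x).
  intros n. destruct Hq as [Hq0 _].
  destruct (Rle_dec y (INR n)); destruct (Rle_dec x (INR n)); try lra.
  specialize (Hq0 n); lra.
Qed.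

Lemma T_nonneg x : 0 <= T x.
Proof.
  destruct Hq as [Hq0 _].
  assert (H := inf_sum_partial (fun k => if Rle_dec x (INR k) then q k else 0) (T x) 0).
  specialize (H ltac:(intros k; cbv beta; destruct (Rle_dec x (INR k)); [apply Hq0|lra]) (HT x)).
  simpl in H. specialize (Hq0 0%nat). revert H; destruct (Rle_dec _ _); intros; lra.
Qed.

Lemma T_le1 x : T x <= 1.
Proof.
  destruct Hq as [Hq0 Hq1].
  apply (inf_sum_le _ q) with (2 := HT x) (3 := Hq1).
  intros n. destruct (Rle_dec x (INR n)); auto; lra.
Qed.

Lemma q_le_T n : q n <= T (INR n).
Proof.
  destruct Hq as [Hq0 Hq1].
  assert (H := inf_sum_partial (fun k => if Rle_dec (INR n) (INR k) then q k else 0) (T (INR n)) n).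
  specialize (H ltac:(intros k; cbv beta; destruct (Rle_dec (INR n) (INR k)); [apply Hq0|lra]) (HT (INR n))).
  eapply Rle_trans; [|exact H].
  assert (H2 := sum_ge_last (fun k => if Rle_dec (INR n) (INR k) then q k else 0) n
     ltac:(intros k; cbv beta; destruct (Rle_dec (INR n) (INR k)); [apply Hq0|lra])).
  simpl in H2. destruct (Rle_dec (INR n) (INR n)); [auto|lra].
Qed.

Lemma q_le_1 n : q n <= 1.
Proof. eapply Rle_trans; [apply q_le_T|apply T_le1]. Qed.

Lemma q_nonneg n : 0 <= q n.
Proof. destruct Hq; auto. Qed.
End TProps.

Lemma C_nonneg n k : 0 <= C n k.
Proof.
  unfold C. apply Rle_mult_inv_pos. apply pos_INR.
  apply Rmult_lt_0_compat; apply INR_fact_lt_0.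
Qed.

Definition bterm (p : R) (n k : nat) := C n k * p ^ k * (1 - p) ^ (n - k).

Lemma bterm_nonneg p n k : 0 <= p <= 1 -> 0 <= bterm p n k.
Proof.
  intros H. unfold bterm. apply Rmult_le_pos; [apply Rmult_le_pos|];
   [apply C_nonneg| apply pow_le; lra| apply pow_le; lra].
Qed.

Lemma sum_bterm p n : sum_f_R0 (bterm p n) n = 1.
Proof.
  unfold bterm. rewrite <- binomial. replace (p + (1 - p)) with 1 by ring. apply pow1.
Qed.

Lemma binom_tail_nonneg p n j : 0 <= p <= 1 -> 0 <= binom_tail p n j.
Proof.
  intros H. unfold binom_tail. apply cond_pos_sum. intros k.
  destruct (Nat.leb j k); [apply (bterm_nonneg p n k H)|lra].
Qed.

Lemma binom_tail_le1 p n j : 0 <= p <= 1 -> binom_tail p n j <= 1.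
Proof.
  intros H. rewrite <- (sum_bterm p n). unfold binom_tail. apply sum_growing.
  intros k. destruct (Nat.leb j k); [unfold bterm; lra|apply (bterm_nonneg p n k H)].
Qed.

Lemma sum_eq_ext (f g : nat -> R) N : (forall k, (k <= N)%nat -> f k = g k) -> sum_f_R0 f N = sum_f_R0 g N.
Proof.
  intros H. induction N; simpl. apply H; lia. rewrite IHN by (intros; apply H; lia). rewrite H; auto.
Qed.

Lemma pow_le_exp u n : -1 <= u -> (1 + u) ^ n <= exp (INR n * u).
Proof.
  intros Hu. rewrite <- exp_pow_INR. apply pow_incr. split; [lra|].
  apply exp_ineq1_le.
Qed.

Lemma chernoff_up p n j lam : 0 <= p <= 1 -> 0 <= lam <= 1/2 ->
  binom_tail p n j <= exp (- lam * INR j + INR n * p * (lam + 2 * lam ^ 2)).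
Proof.
  intros Hp Hl.
  assert (H1 : binom_tail p n j <= exp (- lam * INR j) * (p * exp lam + (1 - p)) ^ n).
  { rewrite binomial. rewrite <- sum_scal_l. unfold binom_tail. apply sum_growing. intros k.
    rewrite Rpow_mult_distr, exp_pow_INR.
    assert (Hb := bterm_nonneg p n k Hp). unfold bterm in Hb.
    assert (Hk: (if Nat.leb j k then 1 else 0) <= exp (- lam * INR j) * exp (INR k * lam)).
    { rewrite <- exp_plus. destruct (Nat.leb j k) eqn:E.
      - apply Nat.leb_le in E. apply le_INR in E.
        assert (H := exp_ineq1_le (- lam * INR j + INR k * lam)). nra.
      - left; apply exp_pos. }
    destruct (Nat.leb j k) eqn:E.
    + replace (C n k * (p ^ k * exp (INR k * lam)) * (1 - p) ^ (n - k)) with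
        ((C n k * p ^ k * (1 - p) ^ (n - k)) * exp (INR k * lam)) by ring. nra.
    + apply Rmult_le_pos; [left; apply exp_pos|].
      assert (0 < exp (INR k * lam)) by apply exp_pos.
      replace (C n k * (p ^ k * exp (INR k * lam)) * (1 - p) ^ (n - k)) with
        ((C n k * p ^ k * (1 - p) ^ (n - k)) * exp (INR k * lam)) by ring. nra. }
  eapply Rle_trans; [exact H1|].
  rewrite exp_plus. apply Rmult_le_compat_l; [left; apply exp_pos|].
  replace (p * exp lam + (1 - p)) with (1 + p * (exp lam - 1)) by ring.
  eapply Rle_trans; [apply pow_le_exp|].
  { assert (1 <= exp lam) by (assert (H := exp_ineq1_le lam); lra). nra. }
  apply exp_le_mono.
  assert (H := exp_quad lam ltac:(lra)). assert (0 <= INR n) by apply pos_INR.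
  rewrite Rmult_assoc. apply Rmult_le_compat_l; auto.
  assert (exp lam - 1 <= lam + 2 * lam ^ 2) by lra.
  apply Rmult_le_compat_l; lra.
Qed.

Lemma chernoff_low p n j lam : 0 <= p <= 1 -> 0 <= lam <= 1/2 ->
  1 - binom_tail p n j <= exp (lam * INR j + INR n * p * (- lam + 2 * lam ^ 2)).
Proof.
  intros Hp Hl.
  assert (E1 : 1 - binom_tail p n j =
     sum_f_R0 (fun k => if Nat.leb j k then 0 else bterm p n k) n).
  { rewrite <- (sum_bterm p n).
    change (binom_tail p n j) with (sum_f_R0 (fun k => if Nat.leb j k then bterm p n k else 0) n).
    assert (forall N, sum_f_R0 (bterm p n) N - sum_f_R0
      (fun k : nat => if Nat.leb j k then bterm p n k else 0) N =
      sum_f_R0 (fun k : nat => if Nat.leb j k then 0 else bterm p n k) N).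
    { induction N; simpl.
      - destruct (Nat.leb j 0); ring.
      - rewrite <- IHN. destruct (Nat.leb j (S N)); ring. }
    apply H. }
  rewrite E1.
  assert (H1 : sum_f_R0 (fun k => if Nat.leb j k then 0 else bterm p n k) n
     <= exp (lam * INR j) * (p * exp (- lam) + (1 - p)) ^ n).
  { rewrite binomial. rewrite <- sum_scal_l. apply sum_growing. intros k.
    rewrite Rpow_mult_distr, exp_pow_INR.
    assert (Hb := bterm_nonneg p n k Hp). unfold bterm in *.
    assert (0 < exp (INR k * - lam)) by apply exp_pos.
    assert (0 < exp (lam * INR j)) by apply exp_pos.
    replace (C n k * (p ^ k * exp (INR k * - lam)) * (1 - p) ^ (n - k)) with
        ((C n k * p ^ k * (1 - p) ^ (n - k)) * exp (INR k * - lam)) by ring.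
    destruct (Nat.leb j k) eqn:E.
    + apply Rmult_le_pos; [lra|]. nra.
    + assert (Hk : 1 <= exp (lam * INR j) * exp (INR k * - lam)).
      { rewrite <- exp_plus. apply Nat.leb_gt in E. apply lt_INR in E.
        assert (Hex := exp_ineq1_le (lam * INR j + INR k * - lam)). nra. }
      nra. }
  eapply Rle_trans; [exact H1|].
  rewrite exp_plus. apply Rmult_le_compat_l; [left; apply exp_pos|].
  replace (p * exp (- lam) + (1 - p)) with (1 + p * (exp (- lam) - 1)) by ring.
  eapply Rle_trans; [apply pow_le_exp|].
  { assert (0 < exp (- lam)) by apply exp_pos. nra. }
  apply exp_le_mono.
  assert (H := exp_quad (- lam) ltac:(lra)). assert (0 <= INR n) by apply pos_INR.
  rewrite Rmult_assoc. apply Rmult_le_compat_l; auto.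
  assert (exp (- lam) - 1 <= - lam + 2 * lam ^ 2) by (replace ((- lam)^2) with (lam ^ 2) in H by ring; lra).
  apply Rmult_le_compat_l; lra.
Qed.

Lemma nat_gt M : exists m : nat, M < INR m.
Proof.
  destruct (archimed (Rabs M)) as [H1 _].
  exists (Z.to_nat (up (Rabs M))).
  rewrite INR_IZR_INZ, Z2Nat.id.
  - assert (M <= Rabs M) by apply RRle_abs. lra.
  - apply le_IZR. assert (0 <= Rabs M) by apply Rabs_pos. lra.
Qed.

Section Key.
Variables (T L G : R -> R) (Y0 K : R).
Hypothesis HTm : forall x y, x <= y -> T y <= T x.
Hypothesis HT0 : forall x, 0 <= T x.
Hypothesis HGp : forall x, 0 < x -> 0 < G x.
Hypothesis HTL : forall x, 0 < x -> T x = L x * G x.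
Hypothesis HSV : slowly_varying L.
Hypothesis HY0 : 1 <= Y0.
Hypothesis HK : 0 < K.
Hypothesis HG : forall y n, Y0 <= y -> y / 2 <= n -> n <= y -> G n <= G y * exp (K * (y - n)).

Lemma L_nonneg x : 0 < x -> 0 <= L x.
Proof.
  intros Hx. assert (H := HTL x Hx). assert (H1 := HT0 x). assert (H2 := HGp x Hx).
  destruct (Rle_dec 0 (L x)); auto. nra.
Qed.

Lemma L_pos_ev : exists M, forall x, M < x -> 0 < x -> 0 < L x.
Proof.
  destruct (HSV 1 ltac:(lra) (1/2) ltac:(lra)) as [M HM].
  exists M. intros x Hx Hx0. specialize (HM x Hx). rewrite Rmult_1_l in HM.
  destruct (L_nonneg x Hx0) as [H|H]; auto.
  rewrite <- H in HM. unfold Rdiv in HM. rewrite Rmult_0_l in HM.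
  rewrite Rminus_0_l, Rabs_Ropp, Rabs_R1 in HM. lra.
Qed.

Variable eps : R.
Hypothesis Heps : 0 < eps < 1.

Definition Fm (m : nat) (t : R) := forall y, Y0 + INR m <= y -> (1 - eps) * L y <= L (t * y).

Lemma Fm_ex t : 0 < t -> exists m, Fm m t.
Proof.
  intros Ht. destruct (HSV t Ht eps ltac:(lra)) as [M HM].
  destruct (nat_gt M) as [m Hm]. exists m. intros y Hy.
  assert (0 <= INR m) by apply pos_INR.
  assert (Hy0 : 0 < y) by lra. assert (Hty : 0 < t * y) by (apply Rmult_lt_0_compat; lra).
  assert (HLt := L_nonneg _ Hty).
  destruct (L_nonneg y Hy0) as [HL|HL].
  - specialize (HM y ltac:(lra)). apply Rabs_def2 in HM. destruct HM as [HM1 HM2].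
    assert (L (t * y) / L y > 1 - eps) by lra.
    apply Rmult_gt_compat_r with (r := L y) in H0; auto.
    unfold Rdiv in H0. rewrite Rmult_assoc, Rinv_l in H0 by lra. lra.
  - rewrite <- HL. lra.
Qed.

Lemma Fm_closed m t : 1 <= t -> (forall eta, 0 < eta -> exists t', t <= t' <= t + eta /\ Fm m t') -> Fm m t.
Proof.
  intros Ht H y Hy.
  assert (0 <= INR m) by apply pos_INR.
  assert (Hy1 : 1 <= y) by lra.
  assert (Hty : 0 < t * y) by (apply Rmult_lt_0_compat; lra).
  set (A := L (t * y)).
  assert (HA : 0 <= A) by (apply L_nonneg; auto).
  destruct (Rle_dec ((1 - eps) * L y) A) as [ok|nok]; auto. exfalso.
  set (d := (1 - eps) * L y - A). assert (Hd : 0 < d) by (unfold d; lra).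
  assert (HKy : 0 < K * y) by (apply Rmult_lt_0_compat; lra).
  set (eta := Rmin (Rmin 1 (1 / (2 * (K * y)))) (d / (4 * (K * y) * (A + 1)))).
  assert (He1 : eta <= 1) by (unfold eta; eapply Rle_trans; [apply Rmin_l|apply Rmin_l]).
  assert (He2 : eta <= 1 / (2 * (K * y))) by (unfold eta; eapply Rle_trans; [apply Rmin_l|apply Rmin_r]).
  assert (He3 : eta <= d / (4 * (K * y) * (A + 1))) by (unfold eta; apply Rmin_r).
  assert (He0 : 0 < eta).
  { unfold eta. apply Rmin_glb_lt; [apply Rmin_glb_lt|].
    lra. apply Rdiv_lt_0_compat; lra. apply Rdiv_lt_0_compat; [lra|].
    apply Rmult_lt_0_compat; lra. }
  destruct (H eta He0) as [t' [[Ht1 Ht2] Hf]].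
  specialize (Hf y Hy).
  assert (Ht'y : 0 < t' * y) by (apply Rmult_lt_0_compat; lra).
  assert (HT1 : T (t' * y) <= T (t * y)) by (apply HTm; nra).
  rewrite (HTL _ Ht'y), (HTL _ Hty) in HT1. fold A in HT1.
  assert (HG1 : G (t * y) <= G (t' * y) * exp (K * (t' * y - t * y))).
  { apply HG; nra. }
  assert (HGt := HGp _ Hty). assert (HGt' := HGp _ Ht'y).
  set (u := K * (t' * y - t * y)) in *.
  assert (Hu : 0 <= u <= 1/2).
  { unfold u. split. apply Rmult_le_pos; nra.
    assert (K * (t' * y - t * y) <= K * y * eta) by nra.
    assert (K * y * eta <= 1/2).
    { apply Rmult_le_reg_l with (/ (K * y)). apply Rinv_0_lt_compat; lra.
      rewrite <- Rmult_assoc, Rinv_l, Rmult_1_l by lra.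
      replace (/ (K * y) * (1 / 2)) with (1 / (2 * (K * y))) by (field; lra). lra. }
    lra. }
  assert (Hex := exp_lin u Hu).
  assert (HL' : L (t' * y) <= A * exp u).
  { apply Rmult_le_reg_r with (G (t' * y)); auto.
    assert (0 <= L (t' * y)) by (apply L_nonneg; auto).
    assert (A * G (t * y) <= A * (G (t' * y) * exp u)) by (apply Rmult_le_compat_l; auto).
    lra. }
  assert (Hu2 : u <= K * y * eta) by (unfold u; nra).
  assert (HKe : K * y * eta * (A + 1) <= d / 4).
  { apply Rmult_le_reg_l with (/ (K * y)). apply Rinv_0_lt_compat; lra.
    assert (eta * (A + 1) <= d / (4 * (K * y))).
    { apply Rmult_le_reg_r with (/ (A + 1)). apply Rinv_0_lt_compat; lra.
      rewrite Rmult_assoc, Rinv_r, Rmult_1_r by lra.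
      replace (d / (4 * (K * y)) * / (A + 1)) with (d / (4 * (K * y) * (A + 1))) by (field; lra).
      auto. }
    replace (/ (K * y) * (K * y * eta * (A + 1))) with (eta * (A + 1)) by (field; lra).
    replace (/ (K * y) * (d / 4)) with (d / (4 * (K * y))) by (field; lra). auto. }
  assert (A * (2 * u) <= d / 2) by nra.
  unfold d in *. nra.
Qed.

Definition Pstep (m : nat) (ab ab' : R * R) :=
  fst ab <= fst ab' < snd ab' /\ snd ab' < snd ab /\ forall t, fst ab' <= t <= snd ab' -> ~ Fm m t.

Lemma Fm_interval : exists m a eta, 1 <= a /\ 0 < eta /\ a + eta <= 2 /\
   forall t, a <= t <= a + eta -> Fm m t.
Proof.
  apply NNPP. intros Hn.
  assert (H : forall m a eta, 1 <= a -> 0 < eta -> a + eta <= 2 -> exists t, a <= t <= a + eta /\ ~ Fm m t).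
  { intros m a eta H1 H2 H3. apply NNPP. intros Hn2. apply Hn. exists m, a, eta. repeat split; auto.
    intros t Ht. apply NNPP. intros Hf. apply Hn2. exists t. auto. }
  assert (Hstep : forall m ab, 1 <= fst ab < snd ab -> snd ab <= 2 -> exists ab', Pstep m ab ab').
  { intros m [a b] [H1 H2] H3. simpl in *.
    destruct (H m a ((b - a) / 2) H1 ltac:(lra) ltac:(lra)) as [t [Ht Hnf]].
    assert (Hc : exists eta, 0 < eta /\ forall t', t <= t' <= t + eta -> ~ Fm m t').
    { apply NNPP. intros Hc. apply Hnf. apply Fm_closed; [lra|].
      intros eta He. apply NNPP. intros Hc2. apply Hc. exists eta. split; auto.
      intros t' Ht' Hf. apply Hc2. exists t'. auto. }
    destruct Hc as [eta [He Heta]].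
    exists (t, Rmin (t + eta) ((t + b) / 2)). unfold Pstep; simpl.
    assert (Rmin (t + eta) ((t + b) / 2) <= t + eta) by apply Rmin_l.
    assert (Rmin (t + eta) ((t + b) / 2) <= (t + b) / 2) by apply Rmin_r.
    assert (t < Rmin (t + eta) ((t + b) / 2)) by (apply Rmin_glb_lt; lra).
    repeat split; try lra.
    intros t' Ht'. apply Heta. lra. }
  set (inh := inhabits ((0, 0) : R * R)).
  set (sq := fix sq (k : nat) : R * R :=
     match k with O => (1, 2) | S k => epsilon inh (Pstep k (sq k)) end).
  assert (Hinv : forall k, (1 <= fst (sq k) < snd (sq k) /\ snd (sq k) <= 2) /\ Pstep k (sq k) (sq (S k))).
  { induction k.
    - assert (1 <= fst (sq 0%nat) < snd (sq 0%nat) /\ snd (sq 0%nat) <= 2) by (simpl; lra).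
      split; auto. change (sq 1%nat) with (epsilon inh (Pstep 0 (sq 0%nat))).
      apply epsilon_spec. apply Hstep; tauto.
    - destruct IHk as [[H1 H2] H3].
      destruct H3 as [P1 [P2 P3]].
      assert (1 <= fst (sq (S k)) < snd (sq (S k)) /\ snd (sq (S k)) <= 2) by lra.
      split; auto. change (sq (S (S k))) with (epsilon inh (Pstep (S k) (sq (S k)))).
      apply epsilon_spec. apply Hstep; tauto. }
  set (a := fun k => fst (sq k)). set (b := fun k => snd (sq k)).
  assert (Hag : Un_growing a). { intros k. destruct (Hinv k) as [_ [P1 _]]. unfold a; lra. }
  assert (Hbd : forall k k', (k <= k')%nat -> b k' <= b k).
  { intros k k' Hkk. induction Hkk; [lra|]. destruct (Hinv m) as [_ [_ [P2 _]]]. unfold b in *; lra. }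
  assert (Had : forall k k', (k <= k')%nat -> a k <= a k').
  { intros k k' Hkk. induction Hkk; [lra|]. specialize (Hag m). lra. }
  assert (Hab : forall i k, a i <= b k).
  { intros i k. destruct (le_lt_dec i k) as [Hik|Hik].
    - specialize (Had i k Hik). destruct (Hinv k) as [[[_ X] _] _]. unfold a, b in *; lra.
    - assert (Hki : (k <= i)%nat) by lia. specialize (Hbd k i Hki).
      destruct (Hinv i) as [[[_ X] _] _]. unfold a, b in *; lra. }
  destruct (growing_cv a Hag) as [l Hl].
  { exists 2. intros x [k Hk]. subst x. specialize (Hab k 0%nat). unfold b in Hab; simpl in Hab. lra. }
  assert (Hal : forall k, a k <= l) by (apply growing_ineq; auto).
  assert (Hlb : forall k, l <= b k).
  { intros k. apply (Rle_cv_lim (Un := a) (Vn := fun _ => b k)); auto.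
    intros e He; exists 0%nat; intros; unfold Rdist; rewrite Rminus_diag, Rabs_R0; auto. }
  assert (Hl1 : 1 <= l) by (specialize (Hal 0%nat); unfold a in Hal; simpl in Hal; lra).
  destruct (Fm_ex l ltac:(lra)) as [m Hm].
  destruct (Hinv m) as [_ [_ [_ P3]]].
  apply (P3 l). split; [apply (Hal (S m))|apply (Hlb (S m))]. auto.
Qed.

Lemma key_eps : exists eta M, 0 < eta /\ 0 < M /\ forall y s, M <= y -> 1 <= s <= 1 + eta ->
   (1 - eps) * L y <= (1 + eps) * L (y * s).
Proof.
  destruct Fm_interval as [m [a [eta [Ha [He [Hae HF]]]]]].
  destruct (HSV a ltac:(lra) eps ltac:(lra)) as [Ma HMa].
  exists (eta / 2), (2 * (Y0 + INR m) + 2 * Rabs Ma + 2).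
  assert (0 <= INR m) by apply pos_INR. assert (0 <= Rabs Ma) by apply Rabs_pos.
  assert (Ma <= Rabs Ma) by apply RRle_abs.
  split; [lra|]. split; [lra|].
  intros y s Hy Hs.
  set (z := y / a).
  assert (Hz1 : y / 2 <= z). { unfold z. apply Rmult_le_compat_l; [lra|]. apply Rinv_le_contravar; lra. }
  assert (Hz0 : 0 < z) by lra.
  assert (Hyz : y = a * z) by (unfold z; field; lra).
  assert (Hz2 : Ma < z) by lra.
  specialize (HMa z Hz2). rewrite <- Hyz in HMa.
  destruct (L_nonneg z Hz0) as [HLz|HLz].
  2:{ rewrite <- HLz in HMa. unfold Rdiv in HMa. rewrite Rinv_0, Rmult_0_r, Rminus_0_l, Rabs_Ropp, Rabs_R1 in HMa. lra. }
  apply Rabs_def2 in HMa. destruct HMa as [HM1 HM2].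
  assert (HLy : L y <= (1 + eps) * L z).
  { assert (L y / L z < 1 + eps) by lra.
    apply Rmult_lt_compat_r with (r := L z) in H2; auto. unfold Rdiv in H2.
    rewrite Rmult_assoc, Rinv_l in H2 by lra. lra. }
  assert (Has : a <= a * s <= a + eta) by (split; nra).
  specialize (HF (a * s) Has z ltac:(lra)).
  replace (a * s * z) with (y * s) in HF by (rewrite Hyz; ring).
  assert (0 <= 1 - eps) by lra.
  assert ((1 - eps) * L y <= (1 - eps) * ((1 + eps) * L z)) by (apply Rmult_le_compat_l; auto).
  nra.
Qed.

End Key.

Section Chain.
Variables (T L G : R -> R) (Y0 K : R).
Hypothesis HTm : forall x y, x <= y -> T y <= T x.
Hypothesis HT0 : forall x, 0 <= T x.
Hypothesis HGp : forall x, 0 < x -> 0 < G x.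
Hypothesis HTL : forall x, 0 < x -> T x = L x * G x.
Hypothesis HSV : slowly_varying L.
Hypothesis HY0 : 1 <= Y0.
Hypothesis HK : 0 < K.
Hypothesis HG : forall y n, Y0 <= y -> y / 2 <= n -> n <= y -> G n <= G y * exp (K * (y - n)).

Let Lnn := L_nonneg T L G HT0 HGp HTL.

Lemma key_T eps : 0 < eps < 1 -> exists eta M, 0 < eta /\ 0 < M /\ forall y s, M <= y -> 1 <= s <= 1 + eta ->
   (1 - eps) * T y * G (y * s) <= (1 + eps) * T (y * s) * G y.
Proof.
  intros He. destruct (key_eps T L G Y0 K HTm HT0 HGp HTL HSV HY0 HK HG eps He) as [eta [M [H1 [H2 H3]]]].
  exists eta, M. split; auto. split; auto. intros y s Hy Hs.
  specialize (H3 y s Hy Hs).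
  assert (Hys : 0 < y * s) by nra.
  rewrite (HTL y), (HTL (y * s)) by lra.
  assert (0 < G y) by (apply HGp; lra). assert (0 < G (y * s)) by (apply HGp; lra).
  replace ((1 - eps) * (L y * G y) * G (y * s)) with (((1 - eps) * L y) * (G y * G (y * s))) by ring.
  replace ((1 + eps) * (L (y * s) * G (y * s)) * G y) with (((1 + eps) * L (y * s)) * (G y * G (y * s))) by ring.
  apply Rmult_le_compat_r; auto. nra.
Qed.

Lemma chain : exists eta M, 0 < eta /\ 0 < M /\ forall k y s, M <= y -> 1 <= s <= (1 + eta) ^ k ->
   L y <= 2 ^ k * L (y * s).
Proof.
  destruct (key_eps T L G Y0 K HTm HT0 HGp HTL HSV HY0 HK HG (1/3) ltac:(lra)) as [eta [M [H1 [H2 H3]]]].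
  exists eta, M. split; auto. split; auto.
  intro k. induction k; intros y s Hy Hs.
  - simpl in Hs. replace s with 1 by lra. rewrite Rmult_1_r; lra.
  - destruct (Rle_dec s (1 + eta)) as [Hs1|Hs1].
    + specialize (H3 y s Hy ltac:(lra)).
      assert (0 <= L (y * s)) by (apply Lnn; nra).
      assert (1 <= 2 ^ k) by (apply pow_R1_Rle; lra).
      simpl. nra.
    + set (s' := s / (1 + eta)).
      assert (Hs' : 1 <= s' <= (1 + eta) ^ k).
      { unfold s'. simpl in Hs. split.
        - apply Rmult_le_reg_r with (1 + eta); [lra|]. unfold Rdiv. rewrite Rmult_assoc, Rinv_l; lra.
        - apply Rmult_le_reg_r with (1 + eta); [lra|]. unfold Rdiv. rewrite Rmult_assoc, Rinv_l; lra. }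
      specialize (IHk (y * (1 + eta)) s' ltac:(nra) Hs').
      replace (y * (1 + eta) * s') with (y * s) in IHk by (unfold s'; field; lra).
      specialize (H3 y (1 + eta) Hy ltac:(lra)).
      simpl. nra.
Qed.

Lemma bernoulli_pow eta k : 0 <= eta -> 1 + INR k * eta <= (1 + eta) ^ k.
Proof.
  intros He. induction k; [simpl; lra|].
  rewrite S_INR, <- tech_pow_Rmult. assert (0 <= INR k) by apply pos_INR.
  assert (1 <= (1 + eta) ^ k) by (apply pow_R1_Rle; lra). nra.
Qed.

Lemma T_compare : exists C0 M, 0 < C0 /\ 0 < M /\ forall n x, M <= n -> n <= x -> x <= 2 * n ->
   T n * G x <= C0 * T x * G n.
Proof.
  destruct chain as [eta [M [H1 [H2 H3]]]].
  destruct (nat_gt (1 / eta)) as [k Hk].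
  exists (2 ^ k), M. split; [apply pow_lt; lra|]. split; auto.
  intros n x Hn Hnx Hx2.
  assert (Hb := bernoulli_pow eta k ltac:(lra)).
  assert (INR k * eta > 1).
  { apply Rmult_lt_reg_r with (/ eta). apply Rinv_0_lt_compat; lra.
    rewrite Rmult_assoc, Rinv_r, Rmult_1_r by lra. unfold Rdiv in Hk; lra. }
  specialize (H3 k n (x / n) Hn).
  assert (1 <= x / n <= 2).
  { split; [apply Rmult_le_reg_r with n; [lra|]; unfold Rdiv; rewrite Rmult_assoc, Rinv_l; lra|].
    apply Rmult_le_reg_r with n; [lra|]; unfold Rdiv; rewrite Rmult_assoc, Rinv_l; lra. }
  specialize (H3 ltac:(lra)). replace (n * (x / n)) with x in H3 by (field; lra).
  rewrite (HTL n), (HTL x) by lra.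
  assert (0 < G x) by (apply HGp; lra). assert (0 < G n) by (apply HGp; lra).
  replace (L n * G n * G x) with (L n * (G n * G x)) by ring.
  replace (2 ^ k * (L x * G x) * G n) with ((2 ^ k * L x) * (G n * G x)) by ring.
  apply Rmult_le_compat_r; auto. nra.
Qed.

Lemma T_lower : exists A c X, 0 < A /\ 0 < c /\ 1 <= X /\ forall x, X <= x ->
   c * exp (- (A * ln x)) * G x <= T x.
Proof.
  destruct chain as [eta [M [H1 [H2 H3]]]].
  destruct (L_pos_ev T L G HT0 HGp HTL HSV) as [M2 HM2].
  set (y0 := M + Rabs M2 + 1).
  assert (Rabs M2 >= M2) by (apply Rle_ge, RRle_abs). assert (0 <= Rabs M2) by apply Rabs_pos.
  assert (Hy0 : 0 < L y0) by (apply HM2; unfold y0; lra).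
  assert (Hln : 0 < ln (1 + eta)) by (rewrite <- ln_1; apply ln_increasing; lra).
  exists (ln 2 / ln (1 + eta)), (L y0 / 2), (y0 + 1).
  assert (Hl2 : 0 < ln 2) by (rewrite <- ln_1; apply ln_increasing; lra).
  split; [apply Rdiv_lt_0_compat; auto|]. split; [lra|]. split; [unfold y0; lra|].
  intros x Hx.
  assert (Hx0 : 0 < x) by (unfold y0 in Hx; lra).
  set (r := ln (x / y0) / ln (1 + eta)).
  assert (Hr0 : 0 <= r).
  { unfold r. apply Rle_mult_inv_pos; auto. rewrite <- ln_1. apply ln_le_mono; [lra|].
    apply Rmult_le_reg_r with y0; [unfold y0; lra|]. unfold Rdiv; rewrite Rmult_assoc, Rinv_l; unfold y0 in *; lra. }
  destruct (archimed r) as [Ha1 Ha2].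
  set (k := Z.to_nat (up r)).
  assert (Hk : INR k = IZR (up r)).
  { unfold k. rewrite INR_IZR_INZ, Z2Nat.id; auto. apply le_IZR; lra. }
  assert (Hpow : x / y0 <= (1 + eta) ^ k).
  { rewrite <- (exp_ln (x / y0)) by (apply Rdiv_lt_0_compat; unfold y0 in *; lra).
    rewrite <- (exp_ln ((1 + eta) ^ k)) by (apply pow_lt; lra).
    rewrite ln_pow by lra. apply exp_le_mono.
    replace (ln (x / y0)) with (r * ln (1 + eta)) by (unfold r; field; lra).
    apply Rmult_le_compat_r; lra. }
  specialize (H3 k y0 (x / y0) ltac:(unfold y0; lra)).
  assert (Hs1 : 1 <= x / y0).
  { apply Rmult_le_reg_r with y0; [unfold y0; lra|]. unfold Rdiv; rewrite Rmult_assoc, Rinv_l; unfold y0 in *; lra. }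
  specialize (H3 ltac:(lra)). replace (y0 * (x / y0)) with x in H3 by (field; unfold y0; lra).
  rewrite (HTL x Hx0). assert (HGx : 0 < G x) by (apply HGp; lra).
  apply Rmult_le_compat_r; [lra|].
  assert (H2k : 2 ^ k = exp (INR k * ln 2)) by (rewrite <- exp_pow_INR, exp_ln; lra).
  assert (Hlx : ln (x / y0) <= ln x).
  { apply ln_le_mono. apply Rdiv_lt_0_compat; unfold y0 in *; lra.
    apply Rmult_le_reg_r with y0; [unfold y0; lra|]. unfold Rdiv; rewrite Rmult_assoc, Rinv_l by (unfold y0; lra).
    unfold y0 in *; nra. }
  assert (Hkb : INR k * ln 2 <= ln 2 + ln 2 / ln (1 + eta) * ln x).
  { rewrite Hk. assert (IZR (up r) <= r + 1) by lra.
    assert (r <= ln x / ln (1 + eta)) by (unfold r; apply Rmult_le_compat_r; [left; apply Rinv_0_lt_compat|]; auto).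
    assert (IZR (up r) * ln 2 <= (r + 1) * ln 2) by (apply Rmult_le_compat_r; lra).
    assert (r * ln 2 <= ln x / ln (1 + eta) * ln 2) by (apply Rmult_le_compat_r; lra).
    replace (ln 2 / ln (1 + eta) * ln x) with (ln x / ln (1 + eta) * ln 2) by (field; lra). lra. }
  assert (HL : L y0 <= exp (ln 2 + ln 2 / ln (1 + eta) * ln x) * L x).
  { eapply Rle_trans; [exact H3|]. rewrite H2k. apply Rmult_le_compat_r.
    apply (L_nonneg T L G HT0 HGp HTL); lra. apply exp_le_mono; auto. }
  rewrite exp_plus, exp_ln in HL by lra.
  assert (He : exp (ln 2 / ln (1 + eta) * ln x) * exp (- (ln 2 / ln (1 + eta) * ln x)) = 1).
  { rewrite <- exp_plus. replace (_ + _) with 0 by ring. apply exp_0. }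
  assert (0 < exp (- (ln 2 / ln (1 + eta) * ln x))) by apply exp_pos.
  apply Rmult_le_reg_r with (2 * exp (ln 2 / ln (1 + eta) * ln x)).
  { assert (0 < exp (ln 2 / ln (1 + eta) * ln x)) by apply exp_pos. lra. }
  replace (L y0 / 2 * exp (- (ln 2 / ln (1 + eta) * ln x)) * (2 * exp (ln 2 / ln (1 + eta) * ln x)))
    with (L y0 * (exp (ln 2 / ln (1 + eta) * ln x) * exp (- (ln 2 / ln (1 + eta) * ln x)))) by (field).
  rewrite He. lra.
Qed.
End Chain.

Lemma sum_mono_N (f : nat -> R) N N' : (forall n, 0 <= f n) -> (N' <= N)%nat -> sum_f_R0 f N' <= sum_f_R0 f N.
Proof.
  intros H Hle. induction Hle; [lra|]. simpl. specialize (H (S m)). lra.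
Qed.

Lemma sum_cut (f : nat -> R) N N' : (forall n, 0 <= f n) -> (forall n, (N < n)%nat -> f n = 0) ->
  sum_f_R0 f N' <= sum_f_R0 f N.
Proof.
  intros H0 Hz. destruct (le_lt_dec N' N) as [H|H]; [apply sum_mono_N; auto|].
  induction H. simpl. rewrite (Hz (S N)) by lia. lra.
  simpl. rewrite (Hz (S m)) by lia. lra.
Qed.

Lemma sum_const_le (f : nat -> R) c N : (forall n, (n <= N)%nat -> f n <= c) -> sum_f_R0 f N <= INR (S N) * c.
Proof.
  intros H. induction N.
  - simpl. specialize (H 0%nat ltac:(lia)). lra.
  - assert (IH := IHN ltac:(intros; apply H; lia)). specialize (H (S N) ltac:(lia)).
    change (sum_f_R0 f (S N)) with (sum_f_R0 f N + f (S N)).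
    rewrite (S_INR (S N)). lra.
Qed.

Lemma nat_gt_x x : 0 <= x -> exists N : nat, x < INR N <= x + 1.
Proof.
  intros Hx. destruct (archimed x) as [H1 H2].
  exists (Z.to_nat (up x)). rewrite INR_IZR_INZ, Z2Nat.id. lra.
  apply le_IZR. lra.
Qed.

Section Bound.
Variables (p : R) (q : nat -> R) (T : R -> R) (Tt : nat -> R).
Hypothesis Hp : 0 < p < 1.
Hypothesis Hq : is_pmf q.
Hypothesis HT : is_tail_v q T.
Hypothesis HTt : is_tail_vtilde q p Tt.

Lemma bound_low (j : nat) (lam : R) :
  let x := INR j / p in 0 < x -> 0 < lam <= 1/8 ->
  (1 - exp (- (2 * p * lam ^ 2 * x))) * T (x + 8 * lam * x) <= Tt j.
Proof.
  intros x Hx Hl.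
  assert (Hj : INR j = p * x) by (unfold x; field; lra).
  set (rho := exp (- (2 * p * lam ^ 2 * x))).
  assert (H1 := inf_sum_scal _ _ (1 - rho) (HT (x + 8 * lam * x))).
  apply (inf_sum_le _ _ _ _) with (2 := H1) (3 := HTt j).
  intros n. cbv beta.
  assert (Hq0 := q_nonneg q Hq n).
  assert (Hb0 := binom_tail_nonneg p n j ltac:(lra)).
  assert (Hrho : 0 < rho) by apply exp_pos.
  destruct (Rle_dec (x + 8 * lam * x) (INR n)) as [Hn|Hn].
  - assert (HL := chernoff_low p n j lam ltac:(lra) ltac:(lra)).
    assert (Hexp : lam * INR j + INR n * p * (- lam + 2 * lam ^ 2) <= - (2 * p * lam ^ 2 * x)).
    { rewrite Hj.
      assert (INR n * p * (- lam + 2 * lam ^ 2) <= (x + 8 * lam * x) * p * (- lam + 2 * lam ^ 2)).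
      { assert (0 <= (INR n - (x + 8 * lam * x)) * (p * (lam - 2 * lam ^ 2))) by (apply Rmult_le_pos; [lra| apply Rmult_le_pos; [lra|nra]]). nra. }
      assert (Hh : 0 <= p * lam ^ 2 * x * (1 - 4 * lam)).
      { apply Rmult_le_pos; [|lra]. apply Rmult_le_pos; [|lra]. apply Rmult_le_pos; [lra|]. nra. }
      assert (Hr : (x + 8 * lam * x) * p * (- lam + 2 * lam ^ 2) + lam * (p * x) = - (2 * p * lam ^ 2 * x) - 4 * (p * lam ^ 2 * x * (1 - 4 * lam))) by ring.
      lra. }
    assert (1 - binom_tail p n j <= rho) by (eapply Rle_trans; [exact HL|apply exp_le_mono; auto]).
    nra.
  - nra.
Qed.

Lemma bound_up (j : nat) (lam C0 kap : R) :
  let x := INR j / p in 0 < x -> 0 < lam <= 1/8 -> 0 < C0 -> kap <= p * lam / 2 ->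
  (forall n : nat, x / 2 <= INR n -> INR n <= x - 8 * lam * x ->
      T (INR n) <= C0 * T x * exp (kap * (x - INR n))) ->
  Tt j <= T (x - 8 * lam * x) + (x + 2) * (C0 * T x * exp (- (2 * p * lam ^ 2 * x)) + exp (- (p * lam * x / 4))).
Proof.
  intros x Hx Hl HC Hk Hmid.
  assert (Hj : INR j = p * x) by (unfold x; field; lra).
  set (w := 8 * lam * x).
  assert (Hw : 0 < w) by (unfold w; nra).
  set (rho := exp (- (2 * p * lam ^ 2 * x))).
  set (e := exp (- (p * lam * x / 4))).
  set (B := fun n => if Rle_dec (x - w) (INR n) then 0 else q n * binom_tail p n j).
  destruct (nat_gt_x x ltac:(lra)) as [N [HN1 HN2]].
  assert (HT0 : 0 <= T x) by apply (T_nonneg q T Hq HT).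
  assert (HB0 : forall n, 0 <= B n).
  { intros n. unfold B. destruct (Rle_dec _ _); [lra|].
    apply Rmult_le_pos; [apply (q_nonneg q Hq)|apply binom_tail_nonneg; lra]. }
  assert (HBz : forall n, (N < n)%nat -> B n = 0).
  { intros n Hn. unfold B. destruct (Rle_dec _ _) as [|Hc]; auto. exfalso. apply Hc.
    apply lt_INR in Hn. lra. }
  assert (HBc : forall n, B n <= C0 * T x * rho + e).
  { intros n. unfold B. assert (0 < rho) by apply exp_pos. assert (0 < e) by apply exp_pos.
    destruct (Rle_dec _ _) as [|Hc]. { assert (0 <= C0 * T x * rho) by (apply Rmult_le_pos; [apply Rmult_le_pos|]; lra). lra. }
    assert (Hq0 := q_nonneg q Hq n).
    assert (Hb0 := binom_tail_nonneg p n j ltac:(lra)).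
    assert (Hcu := chernoff_up p n j lam ltac:(lra) ltac:(lra)).
    rewrite Hj in Hcu.
    assert (Hn0 : 0 <= INR n) by apply pos_INR.
    destruct (Rle_dec (x / 2) (INR n)) as [Hn2|Hn2].
    - specialize (Hmid n Hn2 ltac:(unfold w in Hc; lra)).
      assert (Hqt := q_le_T q T Hq HT n).
      assert (Hexp : kap * (x - INR n) + (- lam * (p * x) + INR n * p * (lam + 2 * lam ^ 2)) <= - (2 * p * lam ^ 2 * x)).
      { assert (Hxn : 8 * lam * x <= x - INR n) by (unfold w in Hc; lra).
        assert (H1 : (kap - lam * p) * (x - INR n) <= - (p * lam / 2) * (x - INR n)).
        { apply Rmult_le_compat_r; lra. }
        assert (H2 : - (p * lam / 2) * (x - INR n) <= - (p * lam / 2) * (8 * lam * x)).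
        { assert (0 <= p * lam / 2) by nra. nra. }
        assert (H3 : 2 * p * lam ^ 2 * INR n <= 2 * p * lam ^ 2 * x).
        { apply Rmult_le_compat_l; [nra|lra]. }
        assert (Hr : kap * (x - INR n) + (- lam * (p * x) + INR n * p * (lam + 2 * lam ^ 2)) =
           (kap - lam * p) * (x - INR n) + 2 * p * lam ^ 2 * INR n) by ring.
        assert (Hr2 : - (p * lam / 2) * (8 * lam * x) = - (4 * p * lam ^ 2 * x)) by field.
        lra. }
      assert (q n * binom_tail p n j <= C0 * T x * rho).
      { eapply Rle_trans. apply Rmult_le_compat; [auto|auto|eapply Rle_trans; [exact Hqt|exact Hmid]|exact Hcu].
        rewrite Rmult_assoc, <- exp_plus. apply Rmult_le_compat_l; [apply Rmult_le_pos; lra|].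
        apply exp_le_mono. auto. }
      lra.
    - assert (Hexp : - lam * (p * x) + INR n * p * (lam + 2 * lam ^ 2) <= - (p * lam * x / 4)).
      { assert (H1 : INR n * p * (lam + 2 * lam ^ 2) <= (x / 2) * p * (lam + 2 * lam ^ 2)).
        { apply Rmult_le_compat_r; [nra|]. apply Rmult_le_compat_r; lra. }
        assert (H2 : (x / 2) * p * (2 * lam ^ 2) <= (x / 2) * p * (lam / 4)).
        { apply Rmult_le_compat_l; [nra|nra]. }
        assert (Hr : (x / 2) * p * (lam + 2 * lam ^ 2) = (x / 2) * p * lam + (x / 2) * p * (2 * lam ^ 2)) by ring.
        assert (Hr2 : (x / 2) * p * (lam / 4) = p * lam * x / 8) by field.
        assert (Hr3 : (x / 2) * p * lam = p * lam * x / 2) by field.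
        assert (Hr4 : - lam * (p * x) = - (p * lam * x)) by ring.
        assert (0 <= p * lam * x) by (apply Rmult_le_pos; [apply Rmult_le_pos|]; lra).
        lra. }
      assert (q n * binom_tail p n j <= e).
      { replace e with (1 * e) by ring. apply Rmult_le_compat; auto. apply (q_le_1 q T Hq HT).
        eapply Rle_trans; [exact Hcu|apply exp_le_mono; auto]. }
      assert (0 <= C0 * T x * rho) by (apply Rmult_le_pos; [apply Rmult_le_pos|]; lra). lra. }
  assert (HS : sum_f_R0 B N <= (x + 2) * (C0 * T x * rho + e)).
  { eapply Rle_trans; [apply sum_const_le; intros; apply HBc|].
    rewrite S_INR. apply Rmult_le_compat_r; [|lra].
    specialize (HBc 0%nat). specialize (HB0 0%nat). lra. }
  apply inf_sum_ub with (2 := HTt j).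
  intros N'.
  assert (HA : forall n, q n * binom_tail p n j = (if Rle_dec (x - w) (INR n) then q n * binom_tail p n j else 0) + B n).
  { intros n. unfold B. destruct (Rle_dec _ _); ring. }
  assert (Hsplit : forall M, sum_f_R0 (fun n => q n * binom_tail p n j) M =
     sum_f_R0 (fun n => if Rle_dec (x - w) (INR n) then q n * binom_tail p n j else 0) M + sum_f_R0 B M).
  { intros M. rewrite <- plus_sum. apply sum_eq_ext. intros; apply HA. }
  rewrite Hsplit.
  assert (H1 : sum_f_R0 (fun n => if Rle_dec (x - w) (INR n) then q n * binom_tail p n j else 0) N'
      <= sum_f_R0 (fun n => if Rle_dec (x - w) (INR n) then q n else 0) N').
  { apply sum_growing. intros n. destruct (Rle_dec _ _); [|lra].
    assert (Hq0 := q_nonneg q Hq n). assert (binom_tail p n j <= 1) by (apply binom_tail_le1; lra).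
    assert (0 <= binom_tail p n j) by (apply binom_tail_nonneg; lra). nra. }
  assert (H2 : sum_f_R0 (fun n => if Rle_dec (x - w) (INR n) then q n else 0) N' <= T (x - w)).
  { apply inf_sum_partial; [|apply HT]. intros n. destruct (Rle_dec _ _); [apply (q_nonneg q Hq)|lra]. }
  assert (H3 : sum_f_R0 B N' <= sum_f_R0 B N) by (apply sum_cut; auto).
  lra.
Qed.
End Bound.

Lemma rp_pos x a : 0 < Rpower x a.
Proof. unfold Rpower; apply exp_pos. Qed.

Lemma rp_mul x a b : Rpower x a * Rpower x b = Rpower x (a + b).
Proof. rewrite Rpower_plus; auto. Qed.

Lemma rp_anti x y a : 0 < x -> x <= y -> a <= 0 -> Rpower y a <= Rpower x a.
Proof.
  intros Hx Hxy Ha. unfold Rpower. apply exp_le_mono.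
  assert (ln x <= ln y) by (apply ln_le_mono; auto).
  nra.
Qed.

Lemma rp_le1 x a : 1 <= x -> a <= 0 -> Rpower x a <= 1.
Proof. intros Hx Ha. rewrite <- (Rpower_O x) by lra. apply Rle_Rpower; auto. Qed.

Lemma rp_base_mono x y a : 0 <= a -> 0 < x <= y -> Rpower x a <= Rpower y a.
Proof. intros; apply Rle_Rpower_l; auto. Qed.

Definition ev (P : R -> Prop) := exists X, forall x, X <= x -> P x.

Lemma ev_and P Q : ev P -> ev Q -> ev (fun x => P x /\ Q x).
Proof.
  intros [X1 H1] [X2 H2]. exists (Rmax X1 X2). intros x Hx.
  split; [apply H1|apply H2]; eapply Rle_trans; try exact Hx; [apply Rmax_l|apply Rmax_r].
Qed.

Lemma ev_ge X0 : ev (fun x => X0 <= x).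
Proof. exists X0; auto. Qed.

Lemma ev_mono (P Q : R -> Prop) : (forall x, P x -> Q x) -> ev P -> ev Q.
Proof. intros H [X HX]. exists X; auto. Qed.

Lemma as_big th C : 0 < th -> ev (fun x => C <= Rpower x th).
Proof.
  intros Hth. set (b := Rabs C + 1).
  assert (Hb : 0 < b) by (unfold b; assert (0 <= Rabs C) by apply Rabs_pos; lra).
  exists (Rpower b (/ th) + 1). intros x Hx.
  assert (H0 := rp_pos b (/ th)).
  assert (Rpower (Rpower b (/ th)) th <= Rpower x th) by (apply rp_base_mono; lra).
  rewrite Rpower_mult, Rinv_l, Rpower_1 in H by lra.
  assert (C <= Rabs C) by apply RRle_abs. unfold b in H. lra.
Qed.

Lemma as_bigc th c C : 0 < th -> 0 < c -> ev (fun x => C <= c * Rpower x th).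
Proof.
  intros Hth Hc. apply (ev_mono (fun x => C / c <= Rpower x th)); [|apply as_big; auto].
  intros x Hx. apply Rmult_le_reg_r with (/ c). apply Rinv_0_lt_compat; auto.
  replace (c * Rpower x th * / c) with (Rpower x th) by (field; lra). auto.
Qed.

Lemma as_small th e : th < 0 -> 0 < e -> ev (fun x => Rpower x th <= e).
Proof.
  intros Hth He. apply (ev_mono (fun x => / e <= Rpower x (- th))); [|apply as_big; lra].
  intros x Hx. replace th with (- - th) by ring. rewrite Rpower_Ropp.
  assert (0 < / e) by (apply Rinv_0_lt_compat; auto).
  replace e with (/ / e) by (field; lra). apply Rinv_le_contravar; auto.
Qed.

Lemma as_ln th A c : 0 < th -> 0 < c -> ev (fun x => A * ln x <= c * Rpower x th).
Proof.
  intros Hth Hc.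
  set (A' := Rabs A).
  assert (HA' : 0 <= A') by apply Rabs_pos.
  apply (ev_mono (fun x => 1 <= x /\ 2 * A' / (th * c) <= Rpower x (th / 2))).
  2:{ apply ev_and; [apply ev_ge|apply as_big; lra]. }
  intros x [Hx1 Hx2].
  assert (Hln : 0 <= ln x) by (rewrite <- ln_1; apply ln_le_mono; lra).
  set (u := Rpower x (th / 2)).
  assert (Hu : 0 < u) by apply rp_pos.
  assert (Hlnu : ln u = th / 2 * ln x) by (unfold u; apply ln_Rpower).
  assert (Hlu : ln u <= u) by (assert (H := ln_le_sub1 u Hu); lra).
  assert (Huu : Rpower x th = u * u) by (unfold u; rewrite rp_mul; f_equal; field).
  assert (HAln : A * ln x <= A' * ln x) by (apply Rmult_le_compat_r; auto; apply RRle_abs).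
  assert (ln x = 2 / th * ln u) by (rewrite Hlnu; field; lra).
  assert (A' * ln x <= 2 * A' / th * u).
  { rewrite H. replace (A' * (2 / th * ln u)) with (2 * A' / th * ln u) by (field; lra).
    apply Rmult_le_compat_l; auto. apply Rle_mult_inv_pos; lra. }
  assert (2 * A' / th <= c * u).
  { apply Rmult_le_reg_r with (/ c). apply Rinv_0_lt_compat; auto.
    replace (c * u * / c) with u by (field; lra).
    replace (2 * A' / th * / c) with (2 * A' / (th * c)) by (field; lra). auto. }
  rewrite Huu. assert (2 * A' / th * u <= c * u * u) by (apply Rmult_le_compat_r; lra).
  lra.
Qed.

Lemma as_exp th c C e : 0 < th -> 0 < c -> 0 < C -> 0 < e ->
  ev (fun x => (x + 2) * C * exp (- (c * Rpower x th)) <= e).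
Proof.
  intros Hth Hc HC He.
  apply (ev_mono (fun x => (1 <= x /\ 1 * ln x <= (c / 2) * Rpower x th) /\ ln 3 + ln C - ln e <= (c / 2) * Rpower x th)).
  2:{ apply ev_and; [apply ev_and; [apply ev_ge|apply as_ln; lra]|apply as_bigc; lra]. }
  intros x [[Hx1 Hx2] Hx3].
  assert (H3 : x + 2 <= exp (ln 3 + ln x)).
  { rewrite exp_plus, exp_ln, exp_ln by lra. lra. }
  replace e with (exp (ln e)) by (apply exp_ln; auto).
  replace C with (exp (ln C)) at 1 by (apply exp_ln; auto).
  assert (0 < x + 2) by lra.
  eapply Rle_trans.
  { apply Rmult_le_compat_r; [left; apply exp_pos|]. apply Rmult_le_compat_r; [left; apply exp_pos|]. exact H3. }
  rewrite <- !exp_plus. apply exp_le_mono. lra.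
Qed.

Theorem general p q T Tt L G mu K Y0 :
  0 < p < 1 -> is_pmf q -> is_tail_v q T -> is_tail_vtilde q p Tt -> slowly_varying L ->
  (forall x, 0 < x -> 0 < G x) -> (forall x, 0 < x -> T x = L x * G x) ->
  1/2 < mu <= 1 -> 0 < K -> 1 <= Y0 ->
  (forall y n, Y0 <= y -> y / 2 <= n -> n <= y -> G n <= G y * exp (K * Rpower y (- mu) * (y - n))) ->
  (forall c, 0 < c -> ev (fun x => exp (- (c * Rpower x ((1/2 + mu)/2))) <= G x)) ->
  Un_cv (fun j => Rabs (Tt j / T (INR j / p) - 1)) 0.
Proof.
  intros Hp Hq HT HTt HSV HGp HTL Hmu HK HY0 HG HD.
  set (ga := (1/2 + mu)/2).
  assert (HTm : forall x y, x <= y -> T y <= T x) by (intros; apply (T_mono q T Hq HT); auto).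
  assert (HT0 : forall x, 0 <= T x) by (intros; apply (T_nonneg q T Hq HT)).
  assert (HG' : forall y n, Y0 <= y -> y / 2 <= n -> n <= y -> G n <= G y * exp (K * (y - n))).
  { intros y n H1 H2 H3. eapply Rle_trans; [apply (HG y n H1 H2 H3)|].
    apply Rmult_le_compat_l; [left; apply HGp; lra|]. apply exp_le_mono.
    assert (Rpower y (- mu) <= 1) by (apply rp_le1; lra).
    assert (0 < Rpower y (- mu)) by apply rp_pos.
    assert (0 <= y - n) by lra.
    assert (K * Rpower y (- mu) <= K) by (rewrite <- (Rmult_1_r K) at 2; apply Rmult_le_compat_l; lra).
    apply Rmult_le_compat_r; lra. }
  intros eps Heps.
  set (e1 := Rmin (1/10) (eps / 10)).
  assert (He1 : 0 < e1 <= 1/10 /\ e1 <= eps / 10).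
  { unfold e1. split; [split|]. apply Rmin_glb_lt; lra. apply Rmin_l. apply Rmin_r. }
  destruct (key_T T L G Y0 K HTm HT0 HGp HTL HSV HY0 HK HG' e1 ltac:(lra)) as [eta1 [M1 [Heta1 [HM1 Hkey]]]].
  destruct (T_compare T L G Y0 K HTm HT0 HGp HTL HSV HY0 HK HG') as [C0 [M2 [HC0 [HM2 Hcmp]]]].
  destruct (T_lower T L G Y0 K HTm HT0 HGp HTL HSV HY0 HK HG') as [A [c3 [X3 [HA [Hc3 [HX3 Hlow]]]]]].
  destruct (HD (p / 128) ltac:(lra)) as [XD HXD].
  assert (Hga1 : ga - 1 < 0) by (unfold ga; lra).
  assert (Hgamu : ga - mu < 0) by (unfold ga; lra).
  assert (Hga2 : 0 < 2 * ga - 1) by (unfold ga; lra).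
  assert (Hga3 : 0 < ga + mu - 1) by (unfold ga; lra).
  assert (Hga0 : 0 < ga) by (unfold ga; lra).
  assert (Hev : ev (fun x =>
     ((((1 + Y0 + 2 * M1 + 2 * M2 + X3 + Rabs XD <= x /\
      Rpower x (ga - 1) <= Rmin (1/2) (eta1 / 2)) /\
      Rpower x (ga - mu) <= e1 / K) /\
      16 * K / p <= Rpower x (ga + mu - 1)) /\
     ((x + 2) * C0 * exp (- (p / 32 * Rpower x (2 * ga - 1))) <= e1 /\
      (x + 2) * 1 * exp (- (p / 32 * Rpower x (2 * ga - 1))) <= e1)) /\
     ((x + 2) * (/ c3) * exp (- (p / 64 * Rpower x ga)) <= e1 /\
      A * ln x <= p / 128 * Rpower x ga))).
  { repeat apply ev_and.
    - apply ev_ge.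
    - apply as_small; auto. apply Rmin_glb_lt; lra.
    - apply as_small; auto. apply Rdiv_lt_0_compat; lra.
    - apply as_big; auto.
    - apply as_exp; lra.
    - apply as_exp; lra.
    - apply as_exp; try lra. apply Rinv_0_lt_compat; auto.
    - apply as_ln; lra. }
  destruct Hev as [X HX].
  destruct (nat_gt (Rabs X * p)) as [N0 HN0].
  exists N0. intros j Hj.
  set (x := INR j / p).
  assert (Hxj : X <= x).
  { unfold x. apply le_INR in Hj. assert (X <= Rabs X) by apply RRle_abs.
    apply Rmult_le_reg_r with p; [lra|]. unfold Rdiv. rewrite Rmult_assoc, Rinv_l by lra. nra. }
  specialize (HX x Hxj).
  destruct HX as [[[[[Hx0 Hx1] Hx2] Hx3] [Hx4 Hx4']] [Hx5 Hx6]].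
  assert (HXD0 : XD <= Rabs XD) by apply RRle_abs.
  assert (0 <= Rabs XD) by apply Rabs_pos.
  assert (Hx : 1 <= x) by lra.
  assert (Hxp : 0 < x) by lra.
  set (lam := Rpower x (ga - 1) / 8).
  set (w := Rpower x ga).
  assert (Hxg : 0 < Rpower x (ga - 1)) by apply rp_pos.
  assert (Hwx : 8 * lam * x = w).
  { unfold lam, w. replace (8 * (Rpower x (ga - 1) / 8) * x) with (Rpower x (ga - 1) * Rpower x 1)
      by (rewrite Rpower_1 by lra; field). rewrite rp_mul. f_equal; ring. }
  assert (Hmin1 := Rmin_l (1/2) (eta1 / 2)). assert (Hmin2 := Rmin_r (1/2) (eta1 / 2)).
  assert (Hlam : 0 < lam <= 1/8) by (unfold lam; split; lra).
  assert (Hw0 : 0 < w) by apply rp_pos.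
  assert (Hwx2 : w <= x / 2) by (rewrite <- Hwx; unfold lam; nra).
  assert (Hrho : 2 * p * lam ^ 2 * x = p / 32 * Rpower x (2 * ga - 1)).
  { unfold lam. replace (2 * ga - 1) with ((ga - 1) + (ga - 1) + 1) by ring.
    rewrite <- !rp_mul, Rpower_1 by lra. field. }
  assert (He : p * lam * x / 4 = p / 32 * w).
  { rewrite <- Hwx. field. }
  set (kap := K * Rpower x (- mu)).
  assert (Hkap0 : 0 < kap) by (unfold kap; apply Rmult_lt_0_compat; [lra|apply rp_pos]).
  assert (Hkap : kap <= p * lam / 2).
  { unfold kap, lam.
    assert (K <= p / 16 * Rpower x (ga + mu - 1)).
    { apply Rmult_le_reg_l with (16 / p). apply Rdiv_lt_0_compat; lra.
      replace (16 / p * (p / 16 * Rpower x (ga + mu - 1))) with (Rpower x (ga + mu - 1)) by (field; lra).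
      replace (16 / p * K) with (16 * K / p) by (field; lra). auto. }
    assert (K * Rpower x (- mu) <= p / 16 * Rpower x (ga + mu - 1) * Rpower x (- mu)).
    { apply Rmult_le_compat_r; [left; apply rp_pos|auto]. }
    rewrite Rmult_assoc, rp_mul in H1. replace (ga + mu - 1 + - mu) with (ga - 1) in H1 by ring.
    lra. }
  assert (Hkw : kap * w <= e1).
  { unfold kap, w. rewrite Rmult_assoc, rp_mul. replace (- mu + ga) with (ga - mu) by ring.
    apply Rmult_le_reg_l with (/ K). apply Rinv_0_lt_compat; lra.
    rewrite <- Rmult_assoc, Rinv_l, Rmult_1_l by lra. unfold Rdiv in Hx2. lra. }
  assert (Hexpkw : exp (kap * w) <= 1 + 2 * e1).
  { assert (0 <= kap * w) by nra. eapply Rle_trans; [apply exp_lin; lra|lra]. }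
  assert (HGx : 0 < G x) by (apply HGp; lra).
  assert (HLb := bound_low p q T Tt Hp Hq HT HTt j lam Hxp Hlam). fold x in HLb.
  rewrite Hrho, Hwx in HLb.
  assert (Hrho1 : exp (- (p / 32 * Rpower x (2 * ga - 1))) <= e1) by (assert (0 < exp (- (p / 32 * Rpower x (2 * ga - 1)))) by apply exp_pos; nra).
  assert (Hk1 := Hkey x (1 + 8 * lam) ltac:(lra) ltac:(unfold lam in *; lra)).
  replace (x * (1 + 8 * lam)) with (x + w) in Hk1 by (rewrite <- Hwx; ring).
  assert (HGxw : G x <= G (x + w) * (1 + 2 * e1)).
  { eapply Rle_trans; [apply (HG (x + w) x); lra|].
    apply Rmult_le_compat_l; [left; apply HGp; lra|].
    eapply Rle_trans; [|exact Hexpkw]. apply exp_le_mono.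
    replace (x + w - x) with w by ring. apply Rmult_le_compat_r; [lra|].
    unfold kap. apply Rmult_le_compat_l; [lra|]. apply rp_anti; lra. }
  assert (HTxw : (1 - e1) * T x <= (1 + e1) * (1 + 2 * e1) * T (x + w)).
  { assert (HTx0 := HT0 x). assert (HTw0 := HT0 (x + w)).
    assert (HGw : 0 < G (x + w)) by (apply HGp; lra).
    assert ((1 - e1) * T x * G x <= (1 + e1) * (1 + 2 * e1) * T (x + w) * G x).
    { assert ((1 - e1) * T x * G x <= (1 - e1) * T x * (G (x + w) * (1 + 2 * e1))).
      { apply Rmult_le_compat_l; auto. apply Rmult_le_pos; lra. }
      nra. }
    apply Rmult_le_reg_r with (G x); auto. }
  assert (Hmid : forall n : nat, x / 2 <= INR n -> INR n <= x - 8 * lam * x ->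
      T (INR n) <= C0 * T x * exp (kap * (x - INR n))).
  { intros n Hn1 Hn2. rewrite Hwx in Hn2.
    assert (Hc := Hcmp (INR n) x ltac:(lra) ltac:(lra) ltac:(lra)).
    assert (Hg := HG x (INR n) ltac:(lra) Hn1 ltac:(lra)).
    fold kap in Hg.
    apply Rmult_le_reg_r with (G x); auto.
    eapply Rle_trans; [exact Hc|].
    replace (C0 * T x * exp (kap * (x - INR n)) * G x) with (C0 * T x * (G x * exp (kap * (x - INR n)))) by ring.
    apply Rmult_le_compat_l; auto. apply Rmult_le_pos; [lra|apply HT0]. }
  assert (HUb := bound_up p q T Tt Hp Hq HT HTt j lam C0 kap Hxp Hlam HC0 Hkap Hmid).
  fold x in HUb. rewrite Hrho, Hwx, He in HUb.
  assert (Hk2 := Hkey (x - w) (x / (x - w)) ltac:(lra)).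
  assert (Hs2 : 1 <= x / (x - w) <= 1 + eta1).
  { split.
    - apply Rmult_le_reg_r with (x - w); [lra|]. unfold Rdiv. rewrite Rmult_assoc, Rinv_l; lra.
    - apply Rmult_le_reg_r with (x - w); [lra|]. unfold Rdiv. rewrite Rmult_assoc, Rinv_l by lra.
      assert (w <= eta1 * (x / 2)).
      { rewrite <- Hwx. unfold lam.
        assert (Rpower x (ga - 1) * x <= eta1 / 2 * x) by (apply Rmult_le_compat_r; lra). lra. }
      nra. }
  specialize (Hk2 Hs2). replace ((x - w) * (x / (x - w))) with x in Hk2 by (field; lra).
  assert (HGxw2 : G (x - w) <= G x * (1 + 2 * e1)).
  { eapply Rle_trans; [apply (HG x (x - w)); lra|].
    apply Rmult_le_compat_l; [lra|].
    eapply Rle_trans; [|exact Hexpkw]. apply exp_le_mono. fold kap.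
    replace (x - (x - w)) with w by ring. lra. }
  assert (HTxw2 : (1 - e1) * T (x - w) <= (1 + e1) * (1 + 2 * e1) * T x).
  { assert (HTx0 := HT0 x). assert (HTw0 := HT0 (x - w)).
    assert (HGw : 0 < G (x - w)) by (apply HGp; lra).
    assert ((1 - e1) * T (x - w) * G x <= (1 + e1) * (1 + 2 * e1) * T x * G x).
    { assert ((1 + e1) * T x * G (x - w) <= (1 + e1) * T x * (G x * (1 + 2 * e1))).
      { apply Rmult_le_compat_l; auto. apply Rmult_le_pos; lra. }
      nra. }
    apply Rmult_le_reg_r with (G x); auto. }
  assert (HTl := Hlow x ltac:(lra)).
  assert (HGD := HXD x ltac:(lra)).
  assert (HTl2 : c3 * exp (- (p / 64 * w)) <= T x).
  { eapply Rle_trans; [|exact HTl].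
    assert (HeA : 0 < exp (- (A * ln x))) by apply exp_pos.
    eapply Rle_trans; [|apply Rmult_le_compat_l; [apply Rmult_le_pos; lra|exact HGD]].
    rewrite Rmult_assoc, <- exp_plus. apply Rmult_le_compat_l; [lra|]. apply exp_le_mono.
    fold ga w in Hx6. fold w. assert (p / 64 * w = 2 * (p / 128 * w)) by field. change ((1 / 2 + mu) / 2) with ga. fold w. lra. }
  assert (HTpos : 0 < T x) by (assert (0 < exp (- (p / 64 * w))) by apply exp_pos; nra).
  assert (Hmid2 : (x + 2) * exp (- (p / 32 * w)) <= e1 * T x).
  { replace (exp (- (p / 32 * w))) with (exp (- (p / 64 * w)) * exp (- (p / 64 * w)))
      by (rewrite <- exp_plus; f_equal; field).
    fold w in Hx5.
    assert (0 < exp (- (p / 64 * w))) by apply exp_pos.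
    replace ((x + 2) * (exp (- (p / 64 * w)) * exp (- (p / 64 * w)))) with
      (((x + 2) * / c3 * exp (- (p / 64 * w))) * (c3 * exp (- (p / 64 * w)))) by (field; lra).
    apply Rmult_le_compat; auto.
    apply Rmult_le_pos; [apply Rmult_le_pos; [lra|left; apply Rinv_0_lt_compat; auto]|lra].
    apply Rmult_le_pos; lra. }
  assert (Hmid1 : (x + 2) * (C0 * T x * exp (- (p / 32 * Rpower x (2 * ga - 1)))) <= e1 * T x).
  { replace ((x + 2) * (C0 * T x * exp (- (p / 32 * Rpower x (2 * ga - 1))))) with
      (((x + 2) * C0 * exp (- (p / 32 * Rpower x (2 * ga - 1)))) * T x) by ring.
    apply Rmult_le_compat_r; lra. }
  assert (HU : Tt j <= (1 + 8 * e1) * T x).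
  { assert (T (x - w) <= (1 + 6 * e1) * T x).
    { apply Rmult_le_reg_l with (1 - e1); [lra|].
      eapply Rle_trans; [exact HTxw2|].
      assert ((1 + e1) * (1 + 2 * e1) <= (1 - e1) * (1 + 6 * e1)) by nra.
      nra. }
    lra. }
  assert (HL : (1 - 5 * e1) * T x <= Tt j).
  { assert (HTw0 := HT0 (x + w)).
    assert ((1 - e1) * T (x + w) <= Tt j).
    { eapply Rle_trans; [|exact HLb]. apply Rmult_le_compat_r; lra. }
    assert ((1 - e1) * (1 - e1) * T x <= (1 + e1) * (1 + 2 * e1) * ((1 - e1) * T (x + w))).
    { replace ((1 + e1) * (1 + 2 * e1) * ((1 - e1) * T (x + w))) with ((1 - e1) * ((1 + e1) * (1 + 2 * e1) * T (x + w))) by ring.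
      rewrite Rmult_assoc. apply Rmult_le_compat_l; lra. }
    assert ((1 - 5 * e1) * ((1 + e1) * (1 + 2 * e1)) <= (1 - e1) * (1 - e1)) by nra.
    assert (0 < (1 + e1) * (1 + 2 * e1)) by nra.
    apply Rmult_le_reg_l with ((1 + e1) * (1 + 2 * e1)); auto.
    assert ((1 + e1) * (1 + 2 * e1) * ((1 - e1) * T (x + w)) <= (1 + e1) * (1 + 2 * e1) * Tt j)
      by (apply Rmult_le_compat_l; lra).
    nra. }
  unfold Rdist. rewrite Rminus_0_r, Rabs_Rabsolu.
  assert (Hr1 : Tt j / T x <= 1 + 8 * e1).
  { apply Rmult_le_reg_r with (T x); auto. unfold Rdiv. rewrite Rmult_assoc, Rinv_l; lra. }
  assert (Hr2 : 1 - 5 * e1 <= Tt j / T x).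
  { apply Rmult_le_reg_r with (T x); auto. unfold Rdiv. rewrite Rmult_assoc, Rinv_l; lra. }
  apply Rabs_def1; lra.
Qed.

Lemma rp_neg1 y : 0 < y -> Rpower y (-1) = / y.
Proof. intros H. replace (-1) with (- (1)) by ring. rewrite Rpower_Ropp, Rpower_1; auto. Qed.

Lemma case1 p q T Tt a L :
  0 < p < 1 -> is_pmf q -> is_tail_v q T -> is_tail_vtilde q p Tt ->
  1 < a -> slowly_varying L -> (forall x, 0 < x -> T x = L x * Rpower x (- a)) ->
  Un_cv (fun j => Rabs (Tt j / T (INR j / p) - 1)) 0.
Proof.
  intros Hp Hq HT HTt Ha HSV HTL.
  apply (general p q T Tt L (fun x => Rpower x (- a)) 1 (2 * a) 1); auto; try lra.
  - intros; apply rp_pos.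
  - intros y n Hy Hn1 Hn2.
    assert (Hn : 0 < n) by lra.
    unfold Rpower at 1 2. rewrite <- exp_plus. apply exp_le_mono.
    rewrite Rpower_Ropp, Rpower_1 by lra.
    assert (Hl : ln y - ln n <= (y - n) / n).
    { replace (ln y - ln n) with (ln (y / n)).
      - assert (H := ln_le_sub1 (y / n) ltac:(apply Rdiv_lt_0_compat; lra)).
        replace ((y - n) / n) with (y / n - 1) by (field; lra). auto.
      - unfold Rdiv. rewrite ln_mult, ln_Rinv by (try apply Rinv_0_lt_compat; lra). ring. }
    assert (Hl2 : (y - n) / n <= 2 * (y - n) / y).
    { apply Rmult_le_reg_r with (n * y). nra.
      replace ((y - n) / n * (n * y)) with ((y - n) * y) by (field; lra).
      replace (2 * (y - n) / y * (n * y)) with ((y - n) * (2 * n)) by (field; lra).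
      apply Rmult_le_compat_l; lra. }
    replace (2 * a * / y * (y - n)) with (a * (2 * (y - n) / y)) by (field; lra).
    assert (a * (ln y - ln n) <= a * (2 * (y - n) / y)) by (apply Rmult_le_compat_l; lra).
    lra.
  - intros c Hc. replace ((1 / 2 + 1) / 2) with (3/4) by field.
    apply (ev_mono (fun x => 1 <= x /\ a * ln x <= c * Rpower x (3/4))).
    2:{ apply ev_and; [apply ev_ge|apply as_ln; lra]. }
    intros x [Hx1 Hx2]. unfold Rpower at 2. apply exp_le_mono. lra.
Qed.

Lemma case2 p q T Tt be de L :
  0 < p < 1 -> is_pmf q -> is_tail_v q T -> is_tail_vtilde q p Tt ->
  0 < be < 1/2 -> 0 < de -> slowly_varying L ->
  (forall x, 0 < x -> T x = L x * exp (- de * Rpower x be)) ->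
  Un_cv (fun j => Rabs (Tt j / T (INR j / p) - 1)) 0.
Proof.
  intros Hp Hq HT HTt Hb Hd HSV HTL.
  apply (general p q T Tt L (fun x => exp (- de * Rpower x be)) (1 - be) (2 * de) 1); auto; try lra.
  - intros; apply exp_pos.
  - intros y n Hy Hn1 Hn2.
    assert (Hn : 0 < n) by lra.
    rewrite <- exp_plus. apply exp_le_mono.
    replace (- (1 - be)) with (be - 1) by ring.
    assert (Hyn : Rpower y be = Rpower n be * Rpower (y / n) be).
    { rewrite Rpower_mult_distr by (try apply Rdiv_lt_0_compat; lra). f_equal. field. lra. }
    assert (Hu : Rpower (y / n) be <= 1 + 2 * (be * ((y - n) / n))).
    { unfold Rpower.
      assert (Hl := ln_le_sub1 (y / n) ltac:(apply Rdiv_lt_0_compat; lra)).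
      replace (y / n - 1) with ((y - n) / n) in Hl by (field; lra).
      assert (H01 : 0 <= (y - n) / n <= 1).
      { split. apply Rle_mult_inv_pos; lra.
        apply Rmult_le_reg_r with n; [lra|]. unfold Rdiv. rewrite Rmult_assoc, Rinv_l; lra. }
      eapply Rle_trans; [apply exp_le_mono; apply Rmult_le_compat_l; [lra|exact Hl]|].
      apply exp_lin. split; nra. }
    assert (Hnb : Rpower n be * ((y - n) / n) = Rpower n (be - 1) * (y - n)).
    { replace (be - 1) with (be + -1) by ring. rewrite <- rp_mul, rp_neg1 by lra. field. lra. }
    assert (Hnb2 : Rpower n (be - 1) <= 2 * Rpower y (be - 1)).
    { eapply Rle_trans; [apply (rp_anti (y / 2)); lra|].
      replace (y / 2) with (y * / 2) by field.
      rewrite <- Rpower_mult_distr by lra.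
      rewrite Rmult_comm. apply Rmult_le_compat_r; [left; apply rp_pos|].
      assert (E : Rpower (/ 2) (be - 1) = Rpower 2 (1 - be))
        by (unfold Rpower; rewrite ln_Rinv by lra; f_equal; ring).
      rewrite E. eapply Rle_trans; [apply (Rle_Rpower 2 (1 - be) 1); lra|].
      rewrite Rpower_1; lra. }
    assert (Hpos : 0 <= Rpower n be) by (left; apply rp_pos).
    assert (Hdiff : Rpower y be - Rpower n be <= 2 * be * (Rpower n (be - 1) * (y - n))).
    { rewrite Hyn. rewrite <- Hnb.
      assert (Rpower n be * Rpower (y / n) be <= Rpower n be * (1 + 2 * (be * ((y - n) / n))))
        by (apply Rmult_le_compat_l; auto).
      lra. }
    assert (Hy0 : 0 <= y - n) by lra.
    assert (Rpower n (be - 1) * (y - n) <= 2 * Rpower y (be - 1) * (y - n)) by (apply Rmult_le_compat_r; lra).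
    assert (0 <= Rpower n (be - 1) * (y - n)) by (apply Rmult_le_pos; [left; apply rp_pos|lra]).
    assert (2 * be * (Rpower n (be - 1) * (y - n)) <= 2 * Rpower y (be - 1) * (y - n)) by nra.
    nra.
  - intros c Hc.
    set (ga := (1 / 2 + (1 - be)) / 2).
    apply (ev_mono (fun x => 1 <= x /\ de / c <= Rpower x (ga - be))).
    2:{ apply ev_and; [apply ev_ge|apply as_big; unfold ga; lra]. }
    intros x [Hx1 Hx2]. apply exp_le_mono.
    assert (Rpower x ga = Rpower x be * Rpower x (ga - be)) by (rewrite rp_mul; f_equal; ring).
    assert (0 < Rpower x be) by apply rp_pos.
    assert (de <= c * Rpower x (ga - be)).
    { apply Rmult_le_reg_l with (/ c). apply Rinv_0_lt_compat; auto.
      replace (/ c * (c * Rpower x (ga - be))) with (Rpower x (ga - be)) by (field; lra).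
      rewrite Rmult_comm. auto. }
    rewrite H. nra.
Qed.

Theorem mainTheorem11 (p : R) (q : nat -> R) (T : R -> R) (Tt : nat -> R) :
  0 < p < 1 ->
  is_pmf q ->
  is_tail_v q T ->
  is_tail_vtilde q p Tt ->
  ((exists (a : R) (L : R -> R), 1 < a /\ slowly_varying L /\
       forall x : R, 0 < x -> T x = L x * Rpower x (- a))
   \/
   (exists (beta delta : R) (L : R -> R),
       0 < beta < 1 / 2 /\ 0 < delta /\ slowly_varying L /\
       forall x : R, 0 < x -> T x = L x * exp (- delta * Rpower x beta))) ->
  Un_cv (fun j : nat => Rabs (Tt j / T (INR j / p) - 1)) 0.
Proof.
  intros Hp Hq HT HTt [[a [L [Ha [HL HTL]]]]|[be [de [L [Hb [Hd [HL HTL]]]]]]].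
  - eapply case1; eauto.
  - eapply case2; eauto.
Qed.
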